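(* Fix integers $T\ge 2$ and $1\le T_n\le T$, a number $\bar\epsilon_n>0$, and rates $0<q_n\le q$. Define $\epsilon_n^1,\dots,\epsilon_n^T$ recursively by $$\epsilon_n^t=\begin{cases}\dfrac{\bar\epsilon_n-\sum_{\tau=1}^{t-1}\epsilon_n^\tau}{T-t+1}\left(\dfrac{q_n}{q}\right)^2, & t<T_n,\\[2ex] \dfrac{\bar\epsilon_n-\sum_{\tau=1}^{t-1}\epsilon_n^\tau}{T-t+1}, & t\ge T_n.\end{cases}$$ Then $\epsilon_n^t\ge \epsilon_n^{t-1}$ for all $2\le t\le T_n$, and $\epsilon_n^t=\epsilon_n^{t-1}$ for all $T_n<t\le T$. In particular, the per-round privacy spent $\epsilon_n^t$ is non-decreasing in $t$ and constant from round $T_n$ on.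
   Context: In the paper's time-adaptive differentially private federated learning scheme, $\bar\epsilon_n$ is the total Rényi-DP privacy budget of client $n$, $T$ the number of rounds, $T_n$ the round at which client $n$ switches from a saving mode (sampling rate $q_n$) to a spending mode (sampling rate $q$), and $\epsilon_n^t$ the Rényi-DP privacy spent by client $n$ in round $t$. *)

(* Defs.v *)
From Stdlib Require Import Reals Lra Lia.
Open Scope R_scope.

Definition rate_factor (Tn : nat) (qn q : R) (t : nat) : R :=
  if Nat.ltb t Tn then (qn / q) ^ 2 else 1.

(* cum_spent T Tn ebar qn q k = sum_{tau=1}^{k} eps^tau, with
   eps^t = (ebar - sum_{tau<t} eps^tau) / (T - t + 1) * factor t. *)
Fixpoint cum_spent (T Tn : nat) (ebar qn q : R) (k : nat) : R :=
  match k with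
  | O => 0
  | S k' =>
      let prev := cum_spent T Tn ebar qn q k' in
      prev + (ebar - prev) / (INR T - INR (S k') + 1) * rate_factor Tn qn q (S k')
  end.

(* eps T Tn ebar qn q t = epsilon_n^t (meaningful for 1 <= t <= T). *)
Definition eps (T Tn : nat) (ebar qn q : R) (t : nat) : R :=
  (ebar - cum_spent T Tn ebar qn q (t - 1)) / (INR T - INR t + 1)
    * rate_factor Tn qn q t.

(* Main.v *)
Require Import Defs.
From Stdlib Require Import Reals Lra Lia.
Open Scope R_scope.

Lemma rf_bounds Tn qn q t : 0 < qn -> qn <= q ->
  (qn/q)^2 <= rate_factor Tn qn q t /\ rate_factor Tn qn q t <= 1 /\ 0 < (qn/q)^2 /\ (qn/q)^2 <= 1.
Proof.
  intros h1 h2.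
  assert (0 < qn/q) by (apply Rdiv_lt_0_compat; lra).
  assert (qn/q <= 1) by (apply (Rmult_le_reg_r q); [lra|]; unfold Rdiv; rewrite Rmult_assoc, Rinv_l; lra).
  assert (0 < (qn/q)^2) by (apply pow_lt; lra).
  assert ((qn/q)^2 <= 1) by (simpl; nra).
  unfold rate_factor; destruct (Nat.ltb t Tn); lra.
Qed.

Lemma rem_nonneg T Tn ebar qn q k : 0 < ebar -> 0 < qn -> qn <= q -> (k <= T)%nat ->
  0 <= ebar - cum_spent T Tn ebar qn q k.
Proof.
  intros he h1 h2; induction k as [|k IH]; intros hk; cbn [cum_spent]; [lra|].
  destruct (rf_bounds Tn qn q (S k) h1 h2) as (a&b&c&d).
  set (f := rate_factor Tn qn q (S k)) in *.
  set (c0 := cum_spent T Tn ebar qn q k).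
  assert (IH' : 0 <= ebar - c0) by (apply IH; lia).
  assert (HN : 1 <= INR T - INR (S k) + 1).
  { assert (INR (S k) <= INR T) by (apply le_INR; lia). lra. }
  set (N := INR T - INR (S k) + 1) in *.
  set (a0 := ebar - c0) in *.
  replace (ebar - (c0 + a0 / N * f)) with (a0 * (1 - f / N)) by (unfold a0; field; lra).
  apply Rmult_le_pos; [lra|].
  assert (f / N <= 1); [|lra].
  apply (Rmult_le_reg_r N); [lra|]. unfold Rdiv; rewrite Rmult_assoc, Rinv_l; lra.
Qed.

Theorem mainTheorem2 (T Tn : nat) (ebar qn q : R) :
  (2 <= T)%nat -> (1 <= Tn)%nat -> (Tn <= T)%nat ->
  0 < ebar -> 0 < qn -> qn <= q ->
  (forall t : nat, (2 <= t)%nat -> (t <= Tn)%nat ->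
     eps T Tn ebar qn q (t - 1) <= eps T Tn ebar qn q t) /\
  (forall t : nat, (Tn < t)%nat -> (t <= T)%nat ->
     eps T Tn ebar qn q t = eps T Tn ebar qn q (t - 1)).
Proof.
  intros hT h1 h2 he hq1 hq2.
  split; intros t ht1 ht2;
  (destruct t as [|[|m]]; [lia|lia|]);
  unfold eps; replace (S (S m) - 1)%nat with (S m) by lia;
  replace (S m - 1)%nat with m by lia;
  cbn [cum_spent];
  assert (HR := rem_nonneg T Tn ebar qn q m he hq1 hq2 ltac:(lia));
  set (c0 := cum_spent T Tn ebar qn q m) in *;
  set (a0 := ebar - c0) in *;
  assert (HN : 1 <= INR T - INR (S (S m)) + 1) by
    (assert (INR (S (S m)) <= INR T) by (apply le_INR; lia); lra);
  replace (INR T - INR (S m) + 1) with ((INR T - INR (S (S m)) + 1) + 1)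
    by (rewrite (S_INR (S m)); ring);
  set (N := INR T - INR (S (S m)) + 1) in *;
  replace (ebar - (c0 + a0 / (N + 1) * rate_factor Tn qn q (S m)))
    with (a0 - a0 / (N + 1) * rate_factor Tn qn q (S m)) by (unfold a0; ring).
  - destruct (rf_bounds Tn qn q (S (S m)) hq1 hq2) as (a&b&c&d).
    assert (Hf : rate_factor Tn qn q (S m) = (qn/q)^2).
    { unfold rate_factor. replace (Nat.ltb (S m) Tn) with true; [reflexivity|].
      symmetry; apply Nat.ltb_lt; lia. }
    rewrite Hf.
    set (r := (qn/q)^2) in *. set (f := rate_factor Tn qn q (S (S m))) in *.
    assert (E : (a0 - a0 / (N + 1) * r) / N * f - a0 / (N + 1) * r
              = a0 * (f * (N + 1 - r) - r * N) / (N * (N + 1))) by (field; lra).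
    assert (0 <= a0 * (f * (N + 1 - r) - r * N) / (N * (N + 1))); [|lra].
    apply Rmult_le_pos; [apply Rmult_le_pos; [lra|assert (0 <= (f - r) * (N + 1 - r)) by (apply Rmult_le_pos; lra); nra]|].
    left; apply Rinv_0_lt_compat; nra.
  - assert (Hf1 : rate_factor Tn qn q (S m) = 1).
    { unfold rate_factor. replace (Nat.ltb (S m) Tn) with false; [reflexivity|].
      symmetry; apply Nat.ltb_ge; lia. }
    assert (Hf2 : rate_factor Tn qn q (S (S m)) = 1).
    { unfold rate_factor. replace (Nat.ltb (S (S m)) Tn) with false; [reflexivity|].
      symmetry; apply Nat.ltb_ge; lia. }
    rewrite Hf1, Hf2. field; lra.
Qed.
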